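(* Let $G$ be an ordered graph, and let $k,\ell \in \mathbb{N}$. If the irreducible block decomposition of $G$ contains at least $k$ blocks of order at least $\ell$, then $S_n(G) \geqslant F_{n,\ell}$ for each $n \leqslant k$.
   Context: Ordered graphs of order $n$ have vertex set $[n]$ with the natural order. A pair of vertices $u<v$ separates the edges of $G$ if every edge $ij$ ($i<j$) has $j\leqslant u$ or $v\leqslant i$; $G$ is irreducible if no pair separates its edges. For ordered graphs $G_1,\dots,G_m$, $G_1+\dots+G_m$ is the ordered graph obtained by placing copies of $G_1,\dots,G_m$ consecutively from left to right with no edges between copies. Every ordered graph $G$ can be written uniquely as $G=G_1+\dots+G_m$ with each $G_i$ irreducible; $(G_1,\dots,G_m)$ is its irreducible block decomposition and the $G_i$ are its irreducible blocks. $S_n(G)$ is the number of distinct (non-isomorphic as ordered graphs) induced ordered subgraphs of $G$ of order $n$. $F_{n,\ell}$: $F_{n,\ell}=0$ for $n<0$, $F_{0,\ell}=1$, $F_{n,\ell}=F_{n-1,\ell}+\dots+F_{n-\ell,\ell}$ for $n\geqslant1$. *)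

(* Defs.v *)
From mathcomp Require Import all_boot.
Set Implicit Arguments. Unset Strict Implicit. Unset Printing Implicit Defensive.

(* An ordered graph of order n: vertex set 'I_n = {0,..,n-1} (the paper's [n],
   shifted by one) with its natural order; an edge ij (i<j) is stored as the
   pair (i, j). *)
Record ograph := OG { ord : nat; edg : {set 'I_ord * 'I_ord} }.

Definition wf (G : ograph) : bool := [forall p in edg G, (p.1 < p.2)%N].

Definition adjn (G : ograph) (i j : nat) : bool :=
  [exists p in edg G, (val p.1 == i) && (val p.2 == j)].

Definition osum (G H : ograph) : ograph :=
  OG [set p : 'I_(ord G + ord H) * 'I_(ord G + ord H) |
        adjn G p.1 p.2 ||
        [&& ord G <= p.1, ord G <= p.2 & adjn H (p.1 - ord G) (p.2 - ord G)]].

Definition oempty : ograph := @OG 0 set0.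

Definition osums (Gs : seq ograph) : ograph := foldr osum oempty Gs.

Definition separates (G : ograph) (u v : 'I_(ord G)) : bool :=
  (u < v) && [forall p in edg G, (p.2 <= u) || (v <= p.1)].

Definition irreducible (G : ograph) : bool :=
  ~~ [exists u : 'I_(ord G), exists v : 'I_(ord G), @separates G u v].

Definition block_decomposition (G : ograph) (Gs : seq ograph) : Prop :=
  G = osums Gs /\ all (fun H => [&& wf H, irreducible H & 0 < ord H]) Gs.

(* strictly increasing embeddings 'I_m -> 'I_n (= m-subsets of [n]) *)
Definition incr m n (f : {ffun 'I_m -> 'I_n}) : bool :=
  [forall i : 'I_m, forall j : 'I_m, (i < j) ==> (f i < f j)].

Definition induced (G : ograph) m (f : {ffun 'I_m -> 'I_(ord G)}) :
  {set 'I_m * 'I_m} := [set p | (f p.1, f p.2) \in edg G].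

(* S_m(G): number of distinct (= non-isomorphic, since ordered graphs on
   the same [m] are isomorphic iff equal) induced ordered subgraphs of order m *)
Definition S (m : nat) (G : ograph) : nat :=
  #|[set @induced G m f | f in [pred f : {ffun 'I_m -> 'I_(ord G)} | @incr m (ord G) f]]|.

(* Fseq l n = [:: F_{n,l}; F_{n-1,l}; ...; F_{0,l}] *)
Fixpoint Fseq (l n : nat) : seq nat :=
  match n with
  | 0 => [:: 1]
  | n'.+1 => let s := Fseq l n' in sumn (take l s) :: s
  end.

Definition F (n l : nat) : nat := head 0 (Fseq l n).

Example F_test : [seq F n 2 | n <- iota 0 7] = [:: 1; 1; 2; 3; 5; 8; 13]. Proof. by []. Qed.

(* Main.v *)
Require Import Defs.
From mathcomp Require Import all_boot.
From mathcomp Require Import zify.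
Set Implicit Arguments. Unset Strict Implicit. Unset Printing Implicit Defensive.

Definition Ind m (G : ograph) := [set @induced G m f | f in [pred f : {ffun 'I_m -> 'I_(ord G)} | @incr m (ord G) f]].

Definition nrel m (E : {set 'I_m * 'I_m}) (i j : nat) : bool :=
  [exists p in E, (val p.1 == i) && (val p.2 == j)].

Lemma nrel_ord m (E : {set 'I_m * 'I_m}) (x y : 'I_m) : nrel E x y = ((x, y) \in E).
Proof.
apply/existsP/idP => [[[p1 p2] /= /and3P [Hp /eqP E1 /eqP E2]]| H].
  by rewrite -(val_inj E1) -(val_inj E2).
by exists (x,y); rewrite H !eqxx.
Qed.

Lemma nrel_lt m (E : {set 'I_m * 'I_m}) i j : nrel E i j -> (i < m) && (j < m).
Proof.
by case/existsP => [[p1 p2] /= /and3P [_ /eqP <- /eqP <-]]; rewrite !ltn_ord.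
Qed.

Lemma nrel_out1 m (E : {set 'I_m * 'I_m}) i j : m <= i -> nrel E i j = false.
Proof. move=> H; case E1: (nrel E i j) => //; move/nrel_lt: E1 => /andP [H1 H2]; lia. Qed.
Lemma nrel_out2 m (E : {set 'I_m * 'I_m}) i j : m <= j -> nrel E i j = false.
Proof. move=> H; case E1: (nrel E i j) => //; move/nrel_lt: E1 => /andP [H1 H2]; lia. Qed.

Lemma incrP m n (f : {ffun 'I_m -> 'I_n}) :
  reflect (forall i j : 'I_m, i < j -> f i < f j) (incr f).
Proof.
apply: (iffP forallP) => [H i j Hij | H i].
  by move: (H i) => /forallP /(_ j) /implyP; apply.
by apply/forallP => j; apply/implyP; apply: H.
Qed.

Definition Phi n a (P : {set 'I_a * 'I_a}) (E : {set 'I_(n-a) * 'I_(n-a)}) : {set 'I_n * 'I_n} :=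
  [set p : 'I_n * 'I_n | nrel P p.1 p.2 || [&& a <= p.1, a <= p.2 & nrel E (p.1 - a) (p.2 - a)]].

Lemma Phi_Ind H G n a (P : {set 'I_a*'I_a}) E : a <= n -> P \in Ind a H ->
  E \in Ind (n-a) G -> Phi P E \in Ind n (osum H G).
Proof.
move=> Han /imsetP [g /= /incrP Hg ->] /imsetP [f /= /incrP Hf ->].
pose h : {ffun 'I_n -> 'I_(ord H + ord G)} :=
  [ffun i => match split (cast_ord (esym (subnKC Han)) i) with
             | inl j => lshift (ord G) (g j) | inr j => rshift (ord H) (f j) end].
apply/imsetP; exists h.
  apply/incrP => i j Hij; rewrite !ffunE.
  case: splitP => [i1 /= Hi1 | i2 /= Hi2]; case: splitP => [j1 /= Hj1 | j2 /= Hj2] /=.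
  - by apply: Hg; rewrite -Hi1 -Hj1.
  - exact: leq_trans (ltn_ord (g i1)) (leq_addr _ _).
  - by have := ltn_ord j1; lia.
  - by rewrite ltn_add2l; apply: Hf; lia.
apply/setP => [[p1 p2]]; rewrite !in_set /= !ffunE /=.
case: splitP => [i1 /= Hi1 | i2 /= Hi2]; case: splitP => [j1 /= Hj1 | j2 /= Hj2] /=.
- rewrite Hi1 Hj1 nrel_ord in_set /=.
  rewrite -[adjn H _ _]/(nrel (edg H) (g i1) (g j1)) nrel_ord.
  by rewrite (leqNgt a) (ltn_ord i1) (leqNgt (ord H)) (ltn_ord (g i1)) /= !orbF.
- rewrite Hi1 Hj2 nrel_out2 ?leq_addr // (leqNgt a) ltn_ord /=.
  rewrite -[adjn H _ _]/(nrel (edg H) (g i1) (ord H + f j2)) nrel_out2 ?leq_addr //.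
  by rewrite (leqNgt (ord H)) (ltn_ord (g i1)).
- rewrite Hi2 Hj1 nrel_out1 ?leq_addr // [a <= j1]leqNgt ltn_ord /=.
  rewrite -[adjn H _ _]/(nrel (edg H) (ord H + f i2) (g j1)) nrel_out1 ?leq_addr //.
  by rewrite [ord H <= g j1]leqNgt (ltn_ord (g j1)) /= ?andbF.
- rewrite Hi2 Hj2 (@nrel_out1 a (induced g)) ?leq_addr // ?leq_addr !addKn /=.
  rewrite -[adjn H _ _]/(nrel (edg H) (ord H + f i2) (ord H + f j2)) (@nrel_out1 (ord H) (edg H)) ?leq_addr //=.
  rewrite -[adjn G _ _]/(nrel (edg G) (f i2) (f j2)) nrel_ord.
  by rewrite nrel_ord in_set.
Qed.

Lemma Phi_key n a (P : {set 'I_a*'I_a}) (E : {set 'I_(n-a)*'I_(n-a)}) (q1 q2 : 'I_(n-a))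
  (p1 p2 : 'I_n) : val p1 = a + q1 -> val p2 = a + q2 ->
  ((p1, p2) \in Phi P E) = ((q1, q2) \in E).
Proof.
move=> H1 H2; rewrite in_set /= H1 H2 (@nrel_out1 a P) ?leq_addr //= ?leq_addr /= !addKn.
by rewrite nrel_ord.
Qed.

Lemma Phi_inj n a (P : {set 'I_a*'I_a}) : a <= n -> injective (@Phi n a P).
Proof.
move=> Han E1 E2 Heq; apply/setP => [[q1 q2]].
have L1 : a + q1 < n by have := ltn_ord q1; lia.
have L2 : a + q2 < n by have := ltn_ord q2; lia.
rewrite -(@Phi_key n a P E1 q1 q2 (Ordinal L1) (Ordinal L2)) //.
by rewrite -(@Phi_key n a P E2 q1 q2 (Ordinal L1) (Ordinal L2)) // Heq.
Qed.

Definition irrb b (Q : {set 'I_b * 'I_b}) : bool :=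
  [forall c : 'I_b, (c.+1 < b) ==>
     [exists i : 'I_b, exists j : 'I_b, ((i, j) \in Q) && (i <= c < j)]].

Lemma Phi_disj n a b (P : {set 'I_a*'I_a}) (Q : {set 'I_b*'I_b}) E E' :
  0 < a -> a < b -> b <= n -> irrb Q -> @Phi n a P E <> @Phi n b Q E'.
Proof.
move=> Ha Hab Hbn /forallP Hirr Heq.
have Lc : a.-1 < b by lia.
move: (Hirr (Ordinal Lc)) => /implyP /=.
have -> : a.-1.+1 < b by lia.
move=> /(_ isT) /existsP [i /existsP [j /and3P [Hij Hi Hj]]].
have Li : i < n by have := ltn_ord i; lia.
have Lj : j < n by have := ltn_ord j; lia.
have : (Ordinal Li, Ordinal Lj) \in Phi Q E' by rewrite in_set /= nrel_ord Hij.
rewrite -Heq in_set /= (@nrel_out2 a P) /=; last by lia.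
have -> : (a <= i) = false by apply/negP => H; lia.
by [].
Qed.

Lemma big_step H G n l (Pc : forall a, {set 'I_a * 'I_a}) :
  (forall a, 0 < a <= l -> (Pc a \in Ind a H) && irrb (Pc a)) ->
  \sum_(1 <= a < (minn l n).+1) #|Ind (n - a) G| <= #|Ind n (osum H G)|.
Proof.
move=> HP.
suff: forall m, m <= minn l n -> exists U : {set {set 'I_n * 'I_n}},
  [/\ U \subset Ind n (osum H G), #|U| = \sum_(1 <= a < m.+1) #|Ind (n - a) G| &
      forall X, X \in U -> exists a, exists E, [/\ 0 < a, a <= m & X = @Phi n a (Pc a) E]].
  move=> /(_ _ (leqnn _)) [U [HU <- _]]; exact: subset_leq_card HU.
elim=> [|m IH] Hm.
  exists set0; split; [exact: sub0set | by rewrite cards0 big_geq | by move=> X; rewrite in_set0].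
have [U [HU HUc HUX]] := IH (ltnW Hm).
have Hml : 0 < m.+1 <= l by move: Hm; rewrite leq_min => /andP [? ?]; apply/andP.
have Hmn : m.+1 <= n by move: Hm; rewrite leq_min => /andP [].
move: (HP _ Hml) => /andP [HPi HPirr].
set B := [set @Phi n m.+1 (Pc m.+1) E | E in Ind (n - m.+1) G].
exists (U :|: B); split.
- rewrite subUset HU /=; apply/subsetP => X /imsetP [E HE ->]; exact: Phi_Ind.
- rewrite cardsU.
  have -> : U :&: B = set0.
    apply/setP => X; rewrite !in_set; apply/negP => /andP [/HUX [a [E [Ha Ham ->]]] /imsetP [E' _ Heq]].
    have Hlt : a < m.+1 by [].
    exact: (Phi_disj Ha Hlt Hmn HPirr Heq).
  rewrite cards0 subn0 big_nat_recr //= HUc card_imset //; exact: Phi_inj.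
- move=> X; rewrite in_setU => /orP [/HUX [a [E [Ha Ham ->]]] | /imsetP [E _ ->]].
    by exists a, E; split => //; apply: leqW.
  by exists m.+1, E.
Qed.

Lemma shift_step H G n : #|Ind n G| <= #|Ind n (osum H G)|.
Proof.
have -> : #|Ind n G| = #|Ind (n - 0) G| by rewrite subn0.
rewrite -(card_imset _ (@Phi_inj n 0 set0 (leq0n n))).
apply: subset_leq_card; apply/subsetP => X /imsetP [E HE ->]; apply: Phi_Ind => //.
apply/imsetP; exists [ffun i : 'I_0 => match i with Ordinal _ Hi => False_rect _ (notF Hi) end].
  by apply/incrP => [[]].
by apply/setP => [[[]]].
Qed.
Lemma enum_sorted L (X : {set 'I_L}) : sorted (fun u v : 'I_L => u < v) (enum X).
Proof.
rewrite /enum_mem -enumT; apply: sorted_filter.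
  by move=> u v w; apply: ltn_trans.
by have := iota_ltn_sorted 0 L; rewrite -val_enum_ord sorted_map.
Qed.

Lemma set_enum L (X : {set 'I_L}) a : #|X| = a ->
  exists g : {ffun 'I_a -> 'I_L},
    [/\ incr g, forall i, g i \in X & forall x, x \in X -> exists i, g i = x].
Proof.
move=> HX.
exists [ffun i => enum_val (cast_ord (esym HX) i)]; split.
- apply/incrP => i j Hij; rewrite !ffunE.
  have x0 : 'I_L.
    by case: L X HX i {Hij} => [|L'] X HX i; [move: (enum_val (cast_ord (esym HX) i)) => [] | exact: ord0].
  rewrite (enum_val_nth x0) (enum_val_nth x0).
  apply: (sorted_ltn_nth (leT := fun u v : 'I_L => u < v)).
  + by move=> u v w; apply: ltn_trans.
  + exact: enum_sorted.
  + by rewrite inE -cardE ltn_ord.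
  + by rewrite inE -cardE ltn_ord.
  + by [].
- by move=> i; rewrite ffunE enum_valP.
- move=> x Hx; exists (cast_ord HX (enum_rank_in Hx x)).
  by rewrite ffunE cast_ordK enum_rankK_in.
Qed.

Definition good L (e : {set 'I_L * 'I_L}) (X : {set 'I_L}) (s t : 'I_L) :=
  [/\ s \in X, t \in X, (forall x, x \in X -> s <= x <= t) &
      forall c, s <= c < t -> exists i j, [/\ i \in X, j \in X, (i,j) \in e & i <= c < j]].

Lemma wide L (e : {set 'I_L * 'I_L}) (X : {set 'I_L}) s t i j :
  good e X s t -> (i, j) \in e -> i < s -> t < j ->
  good e (i |: (j |: (X :\ t))) i j /\ #|i |: (j |: (X :\ t))| = #|X|.+1.
Proof.
move=> [Hs Ht Hb Hc] He His Htj; move: (Hb s Hs) => /andP [_ Hst]; split; first split.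
- by rewrite !in_setU1 eqxx.
- by rewrite !in_setU1 eqxx orbT.
- move=> x; rewrite !in_setU1 in_setD1 => /or3P [/eqP -> | /eqP -> | /andP [_ /Hb]].
  + by rewrite leqnn /=; lia.
  + by rewrite leqnn andbT; lia.
  + by move=> /andP [? ?]; apply/andP; split; lia.
- move=> c Hc'; exists i, j; split => //; by rewrite !in_setU1 eqxx ?orbT.
rewrite cardsU1 cardsU1 (cardsD1 t X) Ht.
have -> : (j \in X :\ t) = false by apply/negP; rewrite in_setD1 => /andP [_ /Hb]; lia.
have -> : (i \in j |: X :\ t) = false.
  by apply/negP; rewrite in_setU1 in_setD1 => /orP [/eqP Hij | /andP [_ /Hb]]; [move: Hij => /(congr1 val) /=; lia | lia].
by [].
Qed.

Lemma goodset L (e : {set 'I_L*'I_L}) :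
 (forall t, t.+1 < L -> exists i j : 'I_L, (i,j) \in e /\ i <= t < j) ->
 forall a, 0 < a -> a <= L -> exists X s t, good e X s t /\ #|X| = a.
Proof.
move=> Hirr; elim=> [//|a IH] _ HaL.
case: (posnP a) => [-> | Ha].
  pose x0 : 'I_L := Ordinal HaL.
  exists [set x0], x0, x0; split; last by rewrite cards1.
  split; rewrite ?in_set1 ?eqxx //.
  - by move=> x; rewrite in_set1 => /eqP ->; rewrite leqnn.
  - move=> c /andP [H1 H2]; lia.
have [X [s [t [HG HX]]]] := IH Ha (ltnW HaL).
have [Hs Ht Hb Hc] := HG.
have Hst : s <= t by move: (Hb s Hs) => /andP [].
case: (boolP [exists v : 'I_L, (s < v < t) && (v \notin X)]) => [/existsP [v /andP [/andP [Hsv Hvt] HvX]] | /existsPn HI].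
  exists (v |: X), s, t; split; last by rewrite cardsU1 HvX HX.
  split; rewrite ?in_setU1 ?Hs ?Ht ?orbT //.
  + move=> x; rewrite in_setU1 => /orP [/eqP -> | /Hb //]; apply/andP; split; lia.
  + move=> c /Hc [i [j [Hi Hj Hij Hc']]]; exists i, j; split; rewrite ?in_setU1 ?Hi ?Hj ?orbT //.
have HI' : forall v : 'I_L, s <= v <= t -> v \in X.
  move=> v /andP [H1 H2].
  case: (v =P s) => [-> //|Hvs]; case: (v =P t) => [-> //|Hvt].
  have Hvs' : (v : nat) <> s by move=> /val_inj.
  have Hvt' : (v : nat) <> t by move=> /val_inj.
  have := HI v; rewrite negb_and negbK => /orP [Hn|//]; exfalso.
  move: Hn; rewrite negb_and -!leqNgt => /orP [Hn|Hn]; lia.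
case: (ltnP t.+1 L) => [HtL | HtL].
  have [i [j [He /andP [Hit Htj]]]] := Hirr t HtL.
  case: (leqP s i) => Hsi.
    exists (j |: X), s, j; split; last first.
      rewrite cardsU1 HX; have -> : (j \in X) = false by apply/negP => /Hb /andP [? ?]; lia.
      by [].
    split.
    - by rewrite in_setU1 Hs orbT.
    - by rewrite in_setU1 eqxx.
    - move=> x; rewrite in_setU1 => /orP [/eqP -> | /Hb /andP [? ?]]; apply/andP; split; lia.
    - move=> c /andP [Hsc Hcj]; case: (ltnP c t) => Hct.
        have /Hc [i' [j' [Hi' Hj' He' Hc']]] : s <= c < t by apply/andP.
        by exists i', j'; split; rewrite ?in_setU1 ?Hi' ?Hj' ?orbT.
      exists i, j; split; rewrite ?in_setU1 ?eqxx //.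
      + by rewrite HI' ?orbT //; apply/andP; split.
      + apply/andP; split; lia.
  have [Hg Hcard] := wide HG He Hsi Htj.
  by exists (i |: (j |: (X :\ t))), i, j; split => //; rewrite Hcard HX.
case: (posnP s) => [Hs0 | Hs0].
  have HXT : X = setT.
    apply/setP => v; rewrite in_setT; apply: HI'; have := ltn_ord v; move=> ?; apply/andP; split; lia.
  move: HX; rewrite HXT cardsT card_ord; lia.
have HsL : s.-1.+1 < L by have := ltn_ord s; lia.
have [i [j [He /andP [Hit Htj]]]] := Hirr s.-1 HsL.
case: (leqP j t) => Hjt.
  exists (i |: X), i, t; split; last first.
    rewrite cardsU1 HX; have -> : (i \in X) = false by apply/negP => /Hb /andP [? ?]; lia.
    by [].
  split.
  - by rewrite in_setU1 eqxx.
  - by rewrite in_setU1 Ht orbT.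
  - move=> x; rewrite in_setU1 => /orP [/eqP -> | /Hb /andP [? ?]]; apply/andP; split; lia.
  - move=> c /andP [Hic Hct]; case: (ltnP c s) => Hcs.
      exists i, j; split; rewrite ?in_setU1 ?eqxx //.
      + by rewrite HI' ?orbT //; apply/andP; split; lia.
      + apply/andP; split; lia.
    have /Hc [i' [j' [Hi' Hj' He' Hc']]] : s <= c < t by apply/andP.
    by exists i', j'; split; rewrite ?in_setU1 ?Hi' ?Hj' ?orbT.
have His : i < s by lia.
have [Hg Hcard] := wide HG He His Hjt.
by exists (i |: (j |: (X :\ t))), i, j; split => //; rewrite Hcard HX.
Qed.
Lemma size_Fseq l n : size (Fseq l n) = n.+1.
Proof. by elim: n => //= n ->. Qed.

Lemma nth_Fseq l n i : i <= n -> nth 0 (Fseq l n) i = F (n - i) l.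
Proof.
elim: n i => [|n IH] [|i] //= Hi.
by rewrite IH // subSS.
Qed.

Lemma F_rec l n : F n.+1 l = \sum_(1 <= a < (minn l n.+1).+1) F (n.+1 - a) l.
Proof.
rewrite /F /= sumnE (big_nth 0) size_take size_Fseq.
have -> : (if l < n.+1 then l else n.+1) = minn l n.+1.
  by rewrite /minn; case: ifP.
rewrite big_add1 /=.
apply: eq_big_nat => i /andP [_ Hi].
rewrite nth_take; last by move: Hi; rewrite leq_min => /andP [].
rewrite nth_Fseq ?subSS //.
by move: Hi; rewrite leq_min => /andP [].
Qed.

Lemma F0 l : F 0 l = 1. Proof. by []. Qed.

Lemma irr_cross H : irreducible H ->
  forall t, t.+1 < ord H -> exists i j : 'I_(ord H), (i,j) \in edg H /\ i <= t < j.
Proof.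
move=> /existsPn Hn t Ht.
have Ht' : t < ord H by lia.
move: (Hn (Ordinal Ht')) => /existsPn /(_ (Ordinal Ht)).
rewrite /separates /= ltnSn /= => /forallPn [[i j]] /=.
rewrite negb_imply negb_or -!ltnNge => /andP [He /andP [H1 H2]].
exists i, j; split => //; apply/andP; split; lia.
Qed.

Lemma irr_sub H a : irreducible H -> 0 < a -> a <= ord H ->
  exists P, (P \in Ind a H) && irrb P.
Proof.
move=> Hirr Ha HaL.
have [X [s [t [[Hs Ht Hb Hc] HX]]]] := goodset (irr_cross Hirr) Ha HaL.
have [g [Hg HgX Hsurj]] := set_enum HX.
move/incrP: (Hg) => Hg'.
exists (induced g); apply/andP; split; first by apply/imsetP; exists g.
apply/forallP => c; apply/implyP => Hc1.
pose c1 : 'I_a := Ordinal Hc1.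
have Hgc : g c < g c1 by apply: Hg'; rewrite /= ltnSn.
have /Hc [i0 [j0 [Hi0 Hj0 He /andP [Hc2 Hc3]]]] : s <= g c < t.
  apply/andP; split; first by move: (Hb _ (HgX c)) => /andP [].
  by move: (Hb _ (HgX c1)) => /andP [_ ?]; lia.
have [i' Hi'] := Hsurj _ Hi0.
have [j' Hj'] := Hsurj _ Hj0.
have Hmono : forall u v : 'I_a, u <= v -> g u <= g v.
  move=> u v; rewrite leq_eqVlt => /orP [/eqP /val_inj -> // | /Hg' /ltnW //].
apply/existsP; exists i'; apply/existsP; exists j'.
rewrite in_set /= Hi' Hj' He /=.
apply/andP; split.
- rewrite leqNgt; apply/negP => Hlt; have := Hg' _ _ Hlt; rewrite Hi'; lia.
- rewrite ltnNge; apply/negP => Hle; have := Hmono _ _ Hle; rewrite Hj'; lia.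
Qed.

Lemma Ind0 G : 0 < #|Ind 0 G|.
Proof.
apply/card_gt0P.
pose f0 : {ffun 'I_0 -> 'I_(ord G)} :=
  [ffun i : 'I_0 => match i with Ordinal _ Hi => False_rect _ (notF Hi) end].
exists (induced f0); apply/imsetP; exists f0 => //.
by apply/incrP => [[]].
Qed.

Lemma main_ind l (Gs : seq ograph) :
  all (fun H => [&& wf H, irreducible H & 0 < ord H]) Gs ->
  forall n, n <= count (fun H => l <= ord H) Gs -> F n l <= #|Ind n (osums Gs)|.
Proof.
elim: Gs => [|H Gs IH] /= Hall n Hn.
  by move: Hn; rewrite leqn0 => /eqP ->; rewrite F0; exact: Ind0.
move/andP: Hall => [/and3P [_ Hirr Hpos] Hall].
case: n Hn => [|n] Hn; first by rewrite F0; exact: Ind0.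
case: (leqP l (ord H)) => HlH.
  rewrite F_rec.
  pose Pc a := odflt set0 [pick P : {set 'I_a*'I_a} | (P \in Ind a H) && irrb P].
  have HP : forall a, 0 < a <= l -> (Pc a \in Ind a H) && irrb (Pc a).
    move=> a /andP [Ha Hal]; rewrite /Pc; case: pickP => [P //|Hno].
    have [P HP] := irr_sub Hirr Ha (leq_trans Hal HlH).
    by rewrite Hno in HP.
  apply: leq_trans (@big_step H (osums Gs) n.+1 l Pc HP).
  rewrite big_nat_cond [X in _ <= X]big_nat_cond; apply: leq_sum => a /andP [/andP [Ha1 Ha2] _].
  apply: IH => //.
  move: Hn; rewrite HlH /=; lia.
apply: leq_trans (@shift_step H (osums Gs) n.+1); apply: IH => //.
move: Hn; rewrite (leqNgt l) HlH /=; lia.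
Qed.

Theorem lemma15 (G : ograph) (k l : nat) (Gs : seq ograph) :
  wf G -> block_decomposition G Gs ->
  k <= count (fun H => l <= ord H) Gs ->
  forall n, n <= k -> F n l <= S n G.
Proof.
move=> _ [HG Hall] Hk n Hn; rewrite HG.
apply: main_ind => //; exact: leq_trans Hn Hk.
Qed.
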